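(* $\mathsf{Cof}(\mathbb{J})\subseteq\mathsf{Cof}(\mathbb{I})\cap\mathbb{W}$.
   Context: $p\mathsf{Ch}^*_\mathbb{Q}=\mathsf{Fun}([0,\infty),\mathsf{Ch}^*_\mathbb{Q})$, non-negatively graded rational cochain complexes. $S^k=\mathbb{Q}$ in degree $k$; $D^k$ ($k\ge1$) is $\mathbb{Q}$ in degrees $k-1,k$ with identity differential; $D^0=0$. For $0\le s<t<\infty$, $\mathbb{S}^k_{[s,t)}$ is $0$ at $r<s$, $S^k$ at $s\le r<t$, $D^k$ at $r\ge t$; $\mathbb{S}^k_{[s,\infty)}$ is $0$ at $r<s$, $S^k$ at $r\ge s$; $\mathbb{D}^k_s$ is $0$ at $r<s$, $D^k$ at $r\ge s$. $\mathbb{I}=\{\mathbb{S}^k_{[s,t)}\to\mathbb{D}^k_s: k\in\mathbb{N},\ 0\le s<t\le\infty\}$, $\mathbb{J}=\{\mathbb{D}^k_t\to\mathbb{D}^k_s: 0\le s<t<\infty\}\cup\{0\to\mathbb{D}^k_s\}$. For a set of maps $K$, $\mathsf{Cof}(K)$ is the class of maps with the left lifting property with respect to all maps having the right lifting property with respect to $K$. $\mathbb{W}$ is the class of pointwise quasi-isomorphisms. *)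

(* Defs.v *)
From HB Require Import structures.
From mathcomp Require Import all_boot all_order all_algebra.
From mathcomp Require Import reals.
From mathcomp Require Import lra zify.
Unset Printing Implicit Defensive.
Import Order.TTheory GRing.Theory Num.Theory.
Local Open Scope ring_scope.

Definition Rp (R : realType) := {r : R | 0 <= r}.

(** Objects of pCh^*_Q = Fun([0,oo), Ch^*_Q): at each r and each degree n >= 0 a
    Q-vector space, a cochain differential (d o d = 0), and structure maps
    for r <= s, functorial and commuting with the differentials. *)
Record pcc (R : realType) := PCC {
  pV : Rp R -> nat -> lmodType rat;
  pd : forall r n, pV r n -> pV r n.+1;
  pd_lin : forall r n, linear (@pd r n);
  pdd : forall r n x, pd r n.+1 (pd r n x) = 0;
  ptr : forall (r s : Rp R) n, val r <= val s -> pV r n -> pV s n;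
  ptr_lin : forall r s n h, linear (@ptr r s n h);
  ptr_id : forall r n (h : val r <= val r) x, @ptr r r n h x = x;
  ptr_comp : forall r s t n (h1 : val r <= val s) (h2 : val s <= val t)
              (h3 : val r <= val t) x,
      @ptr s t n h2 (@ptr r s n h1 x) = @ptr r t n h3 x;
  ptr_d : forall r s n (h : val r <= val s) x,
      pd s n (@ptr r s n h x) = @ptr r s n.+1 h (pd r n x) }.

Arguments pV {R} X r n : rename.
Arguments pd {R} X r n x : rename.
Arguments ptr {R} X {r s} n h x : rename.

Record phom (R : realType) (X Y : pcc R) := PHom {
  phf : forall r n, pV X r n -> pV Y r n;
  phf_lin : forall r n, linear (phf r n);
  phf_d : forall r n x, phf r n.+1 (pd X r n x) = pd Y r n (phf r n x);
  phf_tr : forall r s n (h : val r <= val s) x,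
      phf s n (ptr X n h x) = ptr Y n h (phf r n x) }.

Arguments phom {R} X Y.
Arguments phf {R X Y} h {r n} x : rename.
Arguments PHom {R X Y} phf phf_lin phf_d phf_tr.

Definition llp {R : realType} {A B X Y : pcc R} (i : phom A B) (p : phom X Y) :=
  forall (u : phom A X) (v : phom B Y),
    (forall r n a, phf p (phf u a) = phf v (@phf _ _ _ i r n a)) ->
    exists h : phom B X,
      (forall r n a, phf h (@phf _ _ _ i r n a) = @phf _ _ _ u r n a) /\
      (forall r n b, phf p (@phf _ _ _ h r n b) = @phf _ _ _ v r n b).

Definition mclass (R : realType) := forall X Y : pcc R, phom X Y -> Prop.

Definition RLP {R : realType} (K : mclass R) {X Y : pcc R} (p : phom X Y) :=
  forall (A B : pcc R) (i : phom A B), K A B i -> llp i p.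

Definition Cof {R : realType} (K : mclass R) {A B : pcc R} (i : phom A B) :=
  forall (X Y : pcc R) (p : phom X Y), RLP K p -> llp i p.

Definition bd {R : realType} {X : pcc R} {r : Rp R} :
  forall n, pV X r n -> Prop :=
  fun n => match n return pV X r n -> Prop with
           | 0 => fun y => y = 0
           | m.+1 => fun y => exists z : pV X r m, pd X r m z = y
           end.
Arguments bd {R X r n} y.

(** Quasi-isomorphism of cochain complexes at stage r: the induced maps
    H^n(X r) -> H^n(Y r) are bijective for all n. *)
Definition qiso_at {R : realType} {X Y : pcc R} (f : phom X Y) (r : Rp R) :=
  forall n,
    (forall y : pV Y r n, pd Y r n y = 0 ->
       exists x : pV X r n, pd X r n x = 0 /\ bd (phf f x - y)) /\
    (forall x : pV X r n, pd X r n x = 0 -> bd (phf f x) -> bd x).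

Definition Wq (R : realType) : mclass R :=
  fun X Y f => forall r : Rp R, qiso_at f r.
Arguments Wq {R} _ _ _.

Definition mx1 (a b : nat) : 'M[rat]_(a, b) := const_mx 1.

Lemma mx1_id (a : bool) (x : 'rV[rat]_a) : x *m mx1 a a = x.
Proof.
case: a x => x /=; last by rewrite [x]thinmx0 [_ *m _]thinmx0.
by apply/matrixP => i j; rewrite !mxE big_ord1 mxE mulr1 (ord1 j).
Qed.

Lemma mx1_comp (a b c : bool) (x : 'rV[rat]_a) :
  (a -> c -> b) -> x *m mx1 a b *m mx1 b c = x *m mx1 a c.
Proof.
case: c => /=; last by move=> _; rewrite [LHS]thinmx0 [RHS]thinmx0.
case: a x => x /=; last by move=> _; rewrite [x]thinmx0 !mul0mx.
move=> /(_ isT isT); case: b => // _.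
rewrite -mulmxA; congr mulmx.
by apply/matrixP => i j; rewrite !mxE big_ord1 !mxE mulr1.
Qed.

Lemma mx1_comp0 (a b c : bool) (x : 'rV[rat]_a) :
  ~~ [&& a, b & c] -> x *m mx1 a b *m mx1 b c = 0.
Proof.
case: c => /=; last by rewrite andbF => _; rewrite [LHS]thinmx0.
case: a x => x /=; last by move=> _; rewrite [x]thinmx0 !mul0mx.
by case: b => //= _; rewrite [_ *m mx1 _ 0]thinmx0 mul0mx.
Qed.

Lemma mx1_comm (a b b' c : bool) (x : 'rV[rat]_a) :
  (a -> c -> b = b') -> x *m mx1 a b *m mx1 b c = x *m mx1 a b' *m mx1 b' c.
Proof.
case ac: (a && c).
  move: ac => /andP [ha hc] /(_ ha hc) eb; rewrite -eb.
  by [].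
rewrite !mx1_comp0 //; apply/negP => /and3P [ha _ hc]; by rewrite ha hc in ac.
Qed.

Lemma mx1_lin (a b : nat) : linear (fun x : 'rV[rat]_a => x *m mx1 a b).
Proof. by move=> k x y; rewrite mulmxDl scalemxAl. Qed.

Section DimObj.
Variable R : realType.
Variable dm : Rp R -> nat -> bool.
Hypothesis Hconv : forall (r s t : Rp R) n, val r <= val s -> val s <= val t ->
  dm r n -> dm t n -> dm s n.
Hypothesis Hdd : forall r n, ~~ [&& dm r n, dm r n.+1 & dm r n.+2].
Hypothesis Htd : forall (r s : Rp R) n, val r <= val s ->
  dm r n -> dm s n.+1 -> dm r n.+1 = dm s n.

Definition dimObj : pcc R.
refine (@PCC R (fun r n => 'rV[rat]_(dm r n))
  (fun r n x => x *m mx1 (dm r n) (dm r n.+1)) (fun r n => mx1_lin _ _) _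
  (fun r s n _ x => x *m mx1 (dm r n) (dm s n)) (fun r s n _ => mx1_lin _ _)
  _ _ _).
- by move=> r n x /=; rewrite mx1_comp0.
- by move=> r n _ x /=; rewrite mx1_id.
- by move=> r s t n h1 h2 h3 x /=; rewrite mx1_comp // => ha hc; exact: (Hconv _ _ _ _ h1 h2 ha hc).
- by move=> r s n h x /=; rewrite (@mx1_comm _ (dm r n.+1) (dm s n)) // => ha hc;
     exact: (Htd _ _ _ h ha hc).
Defined.
End DimObj.
Arguments dimObj {R dm} Hconv Hdd Htd.

Section DimHom.
Variable R : realType.
Variables dX dY : Rp R -> nat -> bool.
Variables (hX1 : forall (r s t : Rp R) n, val r <= val s -> val s <= val t ->
  dX r n -> dX t n -> dX s n)
  (hX2 : forall r n, ~~ [&& dX r n, dX r n.+1 & dX r n.+2])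
  (hX3 : forall (r s : Rp R) n, val r <= val s ->
  dX r n -> dX s n.+1 -> dX r n.+1 = dX s n).
Variables (hY1 : forall (r s t : Rp R) n, val r <= val s -> val s <= val t ->
  dY r n -> dY t n -> dY s n)
  (hY2 : forall r n, ~~ [&& dY r n, dY r n.+1 & dY r n.+2])
  (hY3 : forall (r s : Rp R) n, val r <= val s ->
  dY r n -> dY s n.+1 -> dY r n.+1 = dY s n).
Hypothesis Hnt : forall (r s : Rp R) n, val r <= val s ->
  dX r n -> dY s n -> dX s n = dY r n.
Hypothesis Hnd : forall (r : Rp R) n, dX r n -> dY r n.+1 -> dX r n.+1 = dY r n.

Definition dimHom : phom (dimObj hX1 hX2 hX3) (dimObj hY1 hY2 hY3).
refine (@PHom R (dimObj hX1 hX2 hX3) (dimObj hY1 hY2 hY3)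
  (fun r n x => x *m mx1 (dX r n) (dY r n)) (fun r n => mx1_lin _ _) _ _).
- by move=> r n x /=; rewrite (@mx1_comm _ (dX r n.+1) (dY r n)) // => ha hc;
     exact: (Hnd _ _ ha hc).
- by move=> r s n h x /=; rewrite (@mx1_comm _ (dX s n) (dY r n)) // => ha hc;
     exact: (Hnt _ _ _ h ha hc).
Defined.
End DimHom.
Arguments dimHom {R dX dY hX1 hX2 hX3 hY1 hY2 hY3} Hnt Hnd.

(** Dimension functions (each stage/degree is Q or 0). *)
Section Gens.
Variable R : realType.
Implicit Types (r s t : Rp R) (k n : nat).

(* D^k_s : 0 at r < s; D^k (Q in degrees k-1, k, identity differential; D^0 = 0) at r >= s *)
Definition dD k s r n : bool :=
  (val s <= val r) && ((n == k) && (0 < k)%N || (n.+1 == k)).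
(* S^k_[s,t) (t finite): 0 at r < s; S^k at s <= r < t; D^k at r >= t *)
Definition dS k s t r n : bool :=
  (n == k) && (val s <= val r) && ((val r < val t) || (0 < k)%N)
  || (n.+1 == k) && (val t <= val r).
(* S^k_[s,oo): 0 at r < s; S^k at r >= s *)
Definition dSi k s r n : bool := (n == k) && (val s <= val r).
Definition dZ (r : Rp R) (n : nat) : bool := false.

Lemma dD_deg k s r n : dD k s r n -> (n == k) || (n.+1 == k).
Proof. by rewrite /dD => /andP[_ /orP[/andP[-> _]|->]]; rewrite ?orbT. Qed.
Lemma dS_deg k s t r n : dS k s t r n -> (n == k) || (n.+1 == k).
Proof. by rewrite /dS => /orP[/andP[/andP[-> _] _]|/andP[-> _]]; rewrite ?orbT. Qed.
Lemma dSi_deg k s r n : dSi k s r n -> n == k.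
Proof. by rewrite /dSi => /andP[]. Qed.

Lemma deg3 (P : nat -> bool) k :
  (forall n, P n -> (n == k) || (n.+1 == k)) ->
  forall n, ~~ [&& P n, P n.+1 & P n.+2].
Proof.
move=> H n; apply/negP => /and3P[/H a /H b /H c]; move: a b c.
by case: (ltngtP n k) => [nk|kn|->]; rewrite ?eqxx /=;
  do ?[case: eqP => [?|_]]; rewrite //=; lia.
Qed.

Lemma dD_conv k s (r u w : Rp R) n : val r <= val u -> val u <= val w ->
  dD k s r n -> dD k s w n -> dD k s u n.
Proof.
by rewrite /dD => ru _ /andP[sr ->] _; rewrite (le_trans sr ru).
Qed.
Lemma dD_dd k s r n : ~~ [&& dD k s r n, dD k s r n.+1 & dD k s r n.+2].
Proof. exact: (@deg3 _ k (@dD_deg k s r) n). Qed.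
Lemma dD_td k s (r u : Rp R) n : val r <= val u ->
  dD k s r n -> dD k s u n.+1 -> dD k s r n.+1 = dD k s u n.
Proof. by rewrite /dD => _ /andP[-> ->] /andP[-> ->]. Qed.
Definition Dobj k s : pcc R :=
  dimObj (@dD_conv k s) (@dD_dd k s) (@dD_td k s).

Lemma dS_conv k s t (r u w : Rp R) n : val r <= val u -> val u <= val w ->
  dS k s t r n -> dS k s t w n -> dS k s t u n.
Proof.
rewrite /dS => ru uw /orP[/andP[/andP[nk sr] c1]|/andP[nk tr]].
  move=> /orP[/andP[/andP[_ _] c2]|/andP[nk' _]]; last first.
    by move/eqP: nk nk' => ->; rewrite gtn_eqF.
  rewrite nk (le_trans sr ru) /=; case/orP: c2 => [wt|->]; last by rewrite orbT.
  by rewrite (le_lt_trans uw wt).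
by move=> _; rewrite nk (le_trans tr ru) orbT.
Qed.
Lemma dS_dd k s t r n : ~~ [&& dS k s t r n, dS k s t r n.+1 & dS k s t r n.+2].
Proof. exact: (@deg3 _ k (@dS_deg k s t r) n). Qed.
Lemma dS_td k s t (hst : val s <= val t) (r u : Rp R) n : val r <= val u ->
  dS k s t r n -> dS k s t u n.+1 -> dS k s t r n.+1 = dS k s t u n.
Proof.
move=> ru h1 h2; have nk : n.+1 = k.
  by move: (@dS_deg _ _ _ _ _ h1) (@dS_deg _ _ _ _ _ h2); do ?[case: eqP => [?|_]]; rewrite //=; lia.
subst k; move: h1 h2.
rewrite /dS !eqxx !(ltn_eqF (ltnSn _)) !(gtn_eqF (ltnSn _)) /= => tr _.
have tu : val t <= val u := le_trans tr ru.
have sr : val s <= val r := le_trans hst tr.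
by rewrite [X in _ = X]tu orbF sr orbT.
Qed.
Definition Sobj k s t (hst : val s <= val t) : pcc R :=
  dimObj (@dS_conv k s t) (@dS_dd k s t) (@dS_td k s t hst).

Lemma dSi_conv k s (r u w : Rp R) n : val r <= val u -> val u <= val w ->
  dSi k s r n -> dSi k s w n -> dSi k s u n.
Proof. by rewrite /dSi => ru _ /andP[-> sr] _; rewrite (le_trans sr ru). Qed.
Lemma dSi_dd k s r n : ~~ [&& dSi k s r n, dSi k s r n.+1 & dSi k s r n.+2].
Proof.
apply/negP => /and3P[/dSi_deg/eqP a /dSi_deg/eqP b _]; lia.
Qed.
Lemma dSi_td k s (r u : Rp R) n : val r <= val u ->
  dSi k s r n -> dSi k s u n.+1 -> dSi k s r n.+1 = dSi k s u n.
Proof. by move=> _ /dSi_deg/eqP a /dSi_deg/eqP b; exfalso; lia. Qed.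
Definition Siobj k s : pcc R :=
  dimObj (@dSi_conv k s) (@dSi_dd k s) (@dSi_td k s).

Lemma dZ_conv (r u w : Rp R) n : val r <= val u -> val u <= val w ->
  dZ r n -> dZ w n -> dZ u n.
Proof. by []. Qed.
Lemma dZ_dd r n : ~~ [&& dZ r n, dZ r n.+1 & dZ r n.+2].
Proof. by []. Qed.
Lemma dZ_td (r u : Rp R) n : val r <= val u ->
  dZ r n -> dZ u n.+1 -> dZ r n.+1 = dZ u n.
Proof. by []. Qed.
Definition Zobj : pcc R := dimObj dZ_conv dZ_dd dZ_td.

Ltac dnorm := rewrite /dS /dD /dSi /dZ ?eqxx ?(ltn_eqF (ltnSn _)) ?(gtn_eqF (ltnSn _)) /=
  ?andbT ?andbF ?orbF ?orbT ?ltn0Sn ?andbT ?orbT.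

Lemma I_nt k s t (hst : val s <= val t) (r u : Rp R) n : val r <= val u ->
  dS k s t r n -> dD k s u n -> dS k s t u n = dD k s r n.
Proof.
move=> ru h1 h2; case/orP: (@dS_deg _ _ _ _ _ h1) => /eqP nk; subst k;
  move: h1 h2; dnorm.
  by move=> /andP[sr _] /andP[su n0]; rewrite su sr n0 orbT.
by move=> tr _; rewrite (le_trans tr ru) (le_trans hst tr).
Qed.
Lemma I_nd k s t (hst : val s <= val t) (r : Rp R) n :
  dS k s t r n -> dD k s r n.+1 -> dS k s t r n.+1 = dD k s r n.
Proof.
move=> h1 h2; case/orP: (@dS_deg _ _ _ _ _ h1) => /eqP nk; subst k;
  move: h1 h2; dnorm; last by [].
by move=> _ /andP[_ /eqP]; lia.
Qed.
Definition Imap k s t (hst : val s <= val t) : phom (Sobj k s t hst) (Dobj k s) :=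
  dimHom (@I_nt k s t hst) (@I_nd k s t hst).

Lemma Ii_nt k s (r u : Rp R) n : val r <= val u ->
  dSi k s r n -> dD k s u n -> dSi k s u n = dD k s r n.
Proof.
move=> ru h1 h2; move/eqP: (@dSi_deg _ _ _ _ h1) => nk; subst k.
move: h1 h2; dnorm => sr /andP[su n0]; by rewrite su sr n0.
Qed.
Lemma Ii_nd k s (r : Rp R) n :
  dSi k s r n -> dD k s r n.+1 -> dSi k s r n.+1 = dD k s r n.
Proof.
move=> h1 h2; move/eqP: (@dSi_deg _ _ _ _ h1) => nk; subst k.
move: h2; rewrite /dD => /andP[_ /orP[/andP[/eqP ? _]|/eqP ?]]; lia.
Qed.
Definition Iimap k s : phom (Siobj k s) (Dobj k s) :=
  dimHom (@Ii_nt k s) (@Ii_nd k s).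

Lemma J_nt k s t (hst : val s <= val t) (r u : Rp R) n : val r <= val u ->
  dD k t r n -> dD k s u n -> dD k t u n = dD k s r n.
Proof.
rewrite /dD => ru /andP[tr ->] /andP[_ _].
by rewrite (le_trans tr ru) (le_trans hst tr).
Qed.
Lemma J_nd k s t (hst : val s <= val t) (r : Rp R) n :
  dD k t r n -> dD k s r n.+1 -> dD k t r n.+1 = dD k s r n.
Proof.
rewrite /dD => /andP[tr a] /andP[_ b].
by rewrite tr a b (le_trans hst tr).
Qed.
Definition Jmap k s t (hst : val s <= val t) : phom (Dobj k t) (Dobj k s) :=
  dimHom (@J_nt k s t hst) (@J_nd k s t hst).

Lemma Z_nt k s (r u : Rp R) n : val r <= val u ->
  dZ r n -> dD k s u n -> dZ u n = dD k s r n.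
Proof. by []. Qed.
Lemma Z_nd k s (r : Rp R) n : dZ r n -> dD k s r n.+1 -> dZ r n.+1 = dD k s r n.
Proof. by []. Qed.
Definition Zmap k s : phom Zobj (Dobj k s) := dimHom (@Z_nt k s) (@Z_nd k s).

Inductive Igen : mclass R :=
| Igen_fin (k : nat) (s t : Rp R) (hst : val s < val t) :
    Igen _ _ (Imap k s t (ltW hst))
| Igen_inf (k : nat) (s : Rp R) : Igen _ _ (Iimap k s).

Inductive Jgen : mclass R :=
| Jgen_DD (k : nat) (s t : Rp R) (hst : val s < val t) :
    Jgen _ _ (Jmap k s t (ltW hst))
| Jgen_0D (k : nat) (s : Rp R) : Jgen _ _ (Zmap k s).

End Gens.
Arguments Igen {R}.
Arguments Jgen {R}.

(* Main.v *)
Require Import Defs.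
From HB Require Import structures.
From mathcomp Require Import all_boot all_order all_algebra.
From mathcomp Require Import reals.
Import Order.TTheory GRing.Theory Num.Theory.
Local Open Scope ring_scope.

Arguments pd_lin {R} p r n.
Arguments pdd {R} p r n x.
Arguments ptr_lin {R} p {r s} n h.
Arguments ptr_id {R} p {r} n h x.
Arguments ptr_comp {R} p {r s t} n h1 h2 h3 x.
Arguments ptr_d {R} p {r s} n h x.
Arguments phf_lin {R X Y} p r n.
Arguments phf_d {R X Y} p r n x.
Arguments phf_tr {R X Y} p {r s} n h x.

Section Lin.
Variables (V W : lmodType rat) (f : V -> W) (hf : linear f).
Lemma lin0 : f 0 = 0.
Proof.
have H := hf 1 0 0; rewrite !scale1r addr0 in H.
have E : f 0 + 0 = f 0 + f 0 by rewrite addr0 -H.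
by move/addrI: E.
Qed.
Lemma linZ a u : f (a *: u) = a *: f u.
Proof. by rewrite -[a *: u]addr0 hf lin0 addr0. Qed.
Lemma linD u v : f (u + v) = f u + f v.
Proof. by have := hf 1 u v; rewrite !scale1r. Qed.
Lemma linN u : f (- u) = - f u.
Proof. by rewrite -scaleN1r linZ scaleN1r. Qed.
Lemma linB u v : f (u - v) = f u - f v.
Proof. by rewrite linD linN. Qed.
End Lin.
Arguments lin0 {V W f}.
Arguments linZ {V W f}.
Arguments linD {V W f}.
Arguments linN {V W f}.
Arguments linB {V W f}.

Section FF.
Variables (V : lmodType rat) (b : bool).
Lemma ffD (f g : {ffun 'I_b -> V}) j : (f + g) j = f j + g j.
Proof. by rewrite ffunE. Qed.
Lemma ffZ a (f : {ffun 'I_b -> V}) j : (a *: f) j = a *: f j.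
Proof. by rewrite ffunE. Qed.
Lemma ff0 j : (0 : {ffun 'I_b -> V}) j = 0.
Proof. by rewrite ffunE. Qed.
End FF.

Definition coef {b : nat} (z : 'rV[rat]_b) : rat := \sum_j z 0 j.

Lemma coefZD b a (z w : 'rV[rat]_b) : coef (a *: z + w) = a * coef z + coef w.
Proof.
rewrite /coef mulr_sumr -big_split /=; apply: eq_bigr => j _; by rewrite !mxE.
Qed.

Lemma coef_false (b : bool) (z : 'rV[rat]_b) : ~~ b -> coef z = 0.
Proof. by case: b z => // z _; rewrite /coef big_ord0. Qed.

Lemma coef_one (b : bool) : b -> coef (const_mx 1 : 'rV[rat]_b) = 1.
Proof. by case: b => // _; rewrite /coef big_ord1 mxE. Qed.

Lemma rv_coef (b : bool) (z : 'rV[rat]_b) : z = coef z *: const_mx 1.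
Proof.
case: b z => z; apply/matrixP => i j; last by case: j.
by rewrite !mxE (ord1 i) (ord1 j) /coef big_ord1 mulr1.
Qed.

Lemma coef_mx1 (a b : bool) (z : 'rV[rat]_a) :
  coef (z *m mx1 a b) = (b : nat)%:R * coef z.
Proof.
case: a z; case: b => z /=.
- by rewrite (mx1_id true) mul1r.
- by rewrite /coef big_ord0 mul0r.
- rewrite [z]thinmx0 mul0mx /coef big_ord0 mulr0.
  by apply: big1 => j _; rewrite mxE.
- by rewrite /coef !big_ord0 mulr0.
Qed.

Lemma one_mx1 (a b : bool) : a -> b ->
  (const_mx 1 : 'rV[rat]_a) *m mx1 a b = const_mx 1.
Proof. by case: a; case: b => // _ _; rewrite (mx1_id true). Qed.

Lemma sum1 (V : lmodType rat) (b : bool) (F : 'I_b -> V) (i0 : 'I_b) :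
  \sum_i F i = F i0.
Proof. by case: b F i0 => F i0; [rewrite big_ord1 (ord1 i0) | case: i0]. Qed.

Arguments sum1 {V b F} i0.

Lemma ord_bool (b : bool) (j : 'I_b) : b.
Proof. by case: b j => // -[]. Qed.

Definition ord0b (b : bool) (H : b) : 'I_b.
Proof. by case: b H => // _; exact: ord0. Defined.

Arguments ord_bool {b}.
Arguments ord0b {b}.

Section Gen.
Variable R : realType.

Section MkHom.
Variable dm : Rp R -> nat -> bool.
Variables (hc : forall (r s t : Rp R) n, val r <= val s -> val s <= val t ->
  dm r n -> dm t n -> dm s n)
  (hd : forall r n, ~~ [&& dm r n, dm r n.+1 & dm r n.+2])
  (ht : forall (r s : Rp R) n, val r <= val s ->
  dm r n -> dm s n.+1 -> dm r n.+1 = dm s n).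
Variable X : pcc R.
Variable e : forall r n, pV X r n.
Hypothesis He_d : forall r n, dm r n -> pd X r n (e r n) = (dm r n.+1 : nat)%:R *: e r n.+1.
Hypothesis He_tr : forall (r s : Rp R) n (h : val r <= val s), dm r n ->
  ptr X n h (e r n) = (dm s n : nat)%:R *: e s n.

Definition mkHom : phom (dimObj hc hd ht) X.
refine (@PHom R (dimObj hc hd ht) X (fun r n (z : 'rV[rat]_(dm r n)) => coef z *: e r n) _ _ _).
- by move=> r n a z w /=; rewrite coefZD scalerDl scalerA.
- move=> r n z /=; rewrite (coef_mx1 (dm r n) (dm r n.+1) z).
  have [H|H] : dm r n \/ ~~ dm r n by case: (dm r n); [left|right].
    by rewrite (linZ (pd_lin X r n)) He_d // scalerA mulrC.
  by rewrite coef_false // mulr0 !scale0r (lin0 (pd_lin X r n)).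
- move=> r s n h z /=; rewrite (coef_mx1 (dm r n) (dm s n) z).
  have [H|H] : dm r n \/ ~~ dm r n by case: (dm r n); [left|right].
    by rewrite (linZ (ptr_lin X n h)) He_tr // scalerA mulrC.
  by rewrite coef_false // mulr0 !scale0r (lin0 (ptr_lin X n h)).
Defined.

Lemma mkHomE r n z : phf mkHom z = coef z *: e r n.
Proof. by []. Qed.
End MkHom.
Arguments mkHom {dm hc hd ht X e}.
Arguments mkHomE {dm hc hd ht X e}.

Lemma phom_coef dm hc hd ht (X : pcc R) (f : phom (@dimObj R dm hc hd ht) X) r n
  (z : 'rV[rat]_(dm r n)) :
  @phf _ _ _ f r n z = coef z *: @phf _ _ _ f r n (const_mx 1 : 'rV[rat]_(dm r n)).
Proof. by rewrite {1}[z]rv_coef (linZ (phf_lin f r n)). Qed.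

Lemma zero_src dm hc hd ht (X : pcc R) (f : phom (@dimObj R dm hc hd ht) X) r n
  (z : 'rV[rat]_(dm r n)) : ~~ dm r n -> @phf _ _ _ f r n z = 0.
Proof. by move=> H; rewrite phom_coef coef_false // scale0r. Qed.

Arguments phom_coef {dm hc hd ht X} f {r n} z.
Arguments zero_src {dm hc hd ht X} f {r n} z.

Definition pcomp (X Y Z : pcc R) (g : phom Y Z) (f : phom X Y) : phom X Z.
refine (@PHom R X Z (fun r n x => phf g (phf f x)) _ _ _).
- by move=> r n a x y; rewrite (phf_lin f) (phf_lin g).
- by move=> r n x; rewrite !phf_d.
- by move=> r s n h x; rewrite !phf_tr.
Defined.

Arguments pcomp {X Y Z}.
Lemma pcompE (X Y Z : pcc R) (g : phom Y Z) (f : phom X Y) r n x :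
  @phf _ _ _ (pcomp g f) r n x = phf g (phf f x).
Proof. by []. Qed.

Definition trg {X : pcc R} {s : Rp R} (r : Rp R) {n} (x : pV X s n) : pV X r n :=
  match Sumbool.sumbool_of_bool (val s <= val r) with left h => ptr X n h x | right _ => 0 end.

Lemma trgE {X : pcc R} {s r : Rp R} {n} {x : pV X s n} (h : val s <= val r) :
  trg r x = ptr X n h x.
Proof.
rewrite /trg; case: Sumbool.sumbool_of_bool => [h'|H]; last by exfalso; move: h; rewrite H.
by rewrite (bool_irrelevance h' h).
Qed.

Lemma trgN (X : pcc R) (s r : Rp R) n (x : pV X s n) :
  ~~ (val s <= val r) -> trg r x = 0.
Proof.
rewrite /trg; case: Sumbool.sumbool_of_bool => [h'|//]; by rewrite h'.
Qed.

Lemma trg0 (X : pcc R) (s r : Rp R) n : trg r (0 : pV X s n) = 0.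
Proof.
case: (boolP (val s <= val r)) => h; last by rewrite trgN.
by rewrite (trgE h) (lin0 (ptr_lin X n h)).
Qed.

Definition at_deg {X : pcc R} {r m} (x : pV X r m) n : pV X r n :=
  match m =P n with ReflectT H => eq_rect m (pV X r) x n H | ReflectF _ => 0 end.

Lemma at_degE (X : pcc R) r m (x : pV X r m) : at_deg x m = x.
Proof. by rewrite /at_deg; case: eqP => // H; rewrite (eq_axiomK H). Qed.

Lemma at_degN (X : pcc R) r m (x : pV X r m) n : m != n -> at_deg x n = 0.
Proof. by rewrite /at_deg; case: eqP. Qed.

Arguments at_degN {X r m} x {n}.
Arguments at_degE {X r m} x.
Lemma at_degNS (X : pcc R) r m (x : pV X r m) : at_deg x m.+1 = 0.
Proof. by rewrite at_degN // ltn_eqF. Qed.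
Lemma at_degSN (X : pcc R) r m (x : pV X r m.+1) : at_deg x m = 0.
Proof. by rewrite at_degN // gtn_eqF. Qed.
Lemma at_degNSS (X : pcc R) r m (x : pV X r m) : at_deg x m.+2 = 0.
Proof. by rewrite at_degN // ltn_eqF. Qed.
Lemma at_degSSN (X : pcc R) r m (x : pV X r m.+2) : at_deg x m = 0.
Proof. by rewrite at_degN // gtn_eqF. Qed.
Lemma nSn m : m.+1 != m. Proof. by rewrite gtn_eqF. Qed.
Lemma nnS m : m != m.+1. Proof. by rewrite ltn_eqF. Qed.
Lemma nSSn m : m.+2 != m. Proof. by rewrite gtn_eqF. Qed.
Lemma nnSS m : m != m.+2. Proof. by rewrite ltn_eqF. Qed.


Lemma dD_m m (s r : Rp R) : dD R m.+1 s r m = (val s <= val r).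
Proof. by rewrite /dD eqxx orbT andbT. Qed.
Lemma dD_Sm m (s r : Rp R) : dD R m.+1 s r m.+1 = (val s <= val r).
Proof. by rewrite /dD eqxx /= andbT. Qed.
Lemma dD_SSm m (s r : Rp R) : dD R m.+1 s r m.+2 = false.
Proof. rewrite /dD !eqSS (negbTE (nSn m)) (negbTE (nSSn m)) /=; by rewrite andbF. Qed.
Lemma dD_cases k (s r : Rp R) n : dD R k s r n -> (val s <= val r) /\ (n = k /\ (0 < k)%N \/ n.+1 = k).
Proof. by rewrite /dD => /andP[sr /orP[/andP[/eqP E H]|/eqP E]]; split=> //; [left|right]. Qed.
Arguments dD_cases {k s r n}.
Lemma dD0 s r n : dD R 0 s r n = false.
Proof. by rewrite /dD andbF /= andbF. Qed.

Section Dmk.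
Variables (X : pcc R) (s : Rp R) (m : nat) (x : pV X s m).
Definition De r n : pV X r n := trg r (at_deg x n + at_deg (pd X s m x) n).

Lemma De_d r n : dD R m.+1 s r n -> pd X r n (De r n) = (dD R m.+1 s r n.+1 : nat)%:R *: De r n.+1.
Proof.
move=> /dD_cases [sr [[-> _]|[->]]]; rewrite /De.
- rewrite dD_SSm scale0r at_degN ?nnS // at_degE add0r (trgE sr) ptr_d pdd.
  exact: (lin0 (ptr_lin X _ sr)).
- rewrite dD_Sm sr scale1r (at_degN x (nnS m)) at_degE (at_degN _ (nSn m)) at_degE.
  by rewrite addr0 add0r !(trgE sr) ptr_d.
Qed.

Lemma De_tr (r r' : Rp R) n (h : val r <= val r') : dD R m.+1 s r n ->
  ptr X n h (De r n) = (dD R m.+1 s r' n : nat)%:R *: De r' n.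
Proof.
move=> H; have [sr _] := dD_cases H.
have sr' := le_trans sr h.
have -> : dD R m.+1 s r' n by move: H; rewrite /dD sr sr'.
by rewrite scale1r /De (trgE sr) (trgE sr') (ptr_comp X n sr h sr').
Qed.

Definition Dmk : phom (Dobj R m.+1 s) X := mkHom De_d De_tr.
Lemma DmkE r n z : @phf _ _ _ Dmk r n z = coef z *: De r n. Proof. by []. Qed.

Lemma Dmk1 : @phf _ _ _ Dmk s m (const_mx 1 : 'rV[rat]_(dD R m.+1 s s m)) = x.
Proof.
rewrite mkHomE coef_one ?dD_m // scale1r /De at_degE (at_degN _ (nSn m)) addr0.
by rewrite (trgE (lexx _)) ptr_id.
Qed.
End Dmk.

Lemma D_tr1 m (s r : Rp R) (h : val s <= val r) :
  (const_mx 1 : 'rV[rat]_(dD R m.+1 s r m)) = ptr (Dobj R m.+1 s) m h (const_mx 1).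
Proof. by rewrite /= one_mx1 // dD_m. Qed.

Lemma D_d1 m (s r : Rp R) (h : val s <= val r) :
  (const_mx 1 : 'rV[rat]_(dD R m.+1 s r m.+1)) = pd (Dobj R m.+1 s) r m (const_mx 1).
Proof. by rewrite /= one_mx1 // ?dD_m ?dD_Sm. Qed.

Arguments D_tr1 {m s r} h.
Arguments D_d1 {m s r} h.

Lemma D_uniq m (s : Rp R) (X : pcc R) (f g : phom (Dobj R m.+1 s) X) :
  @phf _ _ _ f s m (const_mx 1) = @phf _ _ _ g s m (const_mx 1) ->
  forall r n z, @phf _ _ _ f r n z = @phf _ _ _ g r n z.
Proof.
move=> H r n z; rewrite (phom_coef f) (phom_coef g).
have [Hd|Hd] : dD R m.+1 s r n \/ ~~ dD R m.+1 s r n by case: (dD _ _ _ _ _); [left|right].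
  have [sr [[En _]|[En]]] := dD_cases Hd; subst n.
    by rewrite (D_d1 sr) !phf_d (D_tr1 sr) !phf_tr H.
  by rewrite (D_tr1 sr) !phf_tr H.
by rewrite coef_false // !scale0r.
Qed.

Lemma D_val_tr m (s r : Rp R) (h : val s <= val r) (X : pcc R) (f : phom (Dobj R m.+1 s) X) :
  @phf _ _ _ f r m (const_mx 1) = ptr X m h (@phf _ _ _ f s m (const_mx 1)).
Proof. by rewrite (D_tr1 h) phf_tr. Qed.


Arguments D_uniq {m s X f g}.
Arguments D_val_tr {m s r} h {X} f.
Lemma dS_cases {m} {s t r : Rp R} {n} : dS R m.+1 s t r n ->
  (n = m.+1 /\ val s <= val r) \/ (n = m /\ val t <= val r).
Proof.
rewrite /dS => /orP[/andP[/andP[/eqP E sr] _]|/andP[/eqP [E] tr]]; [left|right]; by [].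
Qed.
Lemma dS_Sm m (s t r : Rp R) : dS R m.+1 s t r m.+1 = (val s <= val r).
Proof. by rewrite /dS eqxx /= orbT andbT eqSS (negbTE (nSn m)) /= orbF. Qed.
Lemma dS_m m (s t r : Rp R) : dS R m.+1 s t r m = (val t <= val r).
Proof. by rewrite /dS eqxx (negbTE (nnS m)). Qed.
Lemma dS_SSm m (s t r : Rp R) : dS R m.+1 s t r m.+2 = false.
Proof. by rewrite /dS !eqSS (negbTE (nSn m)) (negbTE (nSSn m)). Qed.
Lemma dSi_cases {k} {s r : Rp R} {n} : dSi R k s r n -> n = k /\ val s <= val r.
Proof. by rewrite /dSi => /andP[/eqP E sr]. Qed.
Lemma dSi_k k (s r : Rp R) : dSi R k s r k = (val s <= val r).
Proof. by rewrite /dSi eqxx. Qed.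
Lemma dSi_Sk k (s r : Rp R) : dSi R k s r k.+1 = false.
Proof. by rewrite /dSi (negbTE (nSn k)). Qed.

Section Smk.
Variables (X : pcc R) (s t : Rp R) (hst : val s <= val t) (m : nat).
Variables (c : pV X s m.+1) (w : pV X t m).
Hypotheses (Hc : pd X s m.+1 c = 0) (Hw : pd X t m w = ptr X m.+1 hst c).
Definition Se r n : pV X r n := trg r (at_deg c n) + trg r (at_deg w n).

Lemma Se_Sm {r} (sr : val s <= val r) : Se r m.+1 = ptr X m.+1 sr c.
Proof. by rewrite /Se at_degE (at_degN w (nnS m)) trg0 addr0 (trgE sr). Qed.
Lemma Se_m {r} (tr : val t <= val r) : Se r m = ptr X m tr w.
Proof. by rewrite /Se at_degE (at_degN c (nSn m)) trg0 add0r (trgE tr). Qed.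

Lemma Se_d r n : dS R m.+1 s t r n -> pd X r n (Se r n) = (dS R m.+1 s t r n.+1 : nat)%:R *: Se r n.+1.
Proof.
move=> /dS_cases [[-> sr]|[-> tr]].
  by rewrite dS_SSm scale0r (Se_Sm sr) ptr_d Hc (lin0 (ptr_lin X _ sr)).
have sr := le_trans hst tr.
rewrite dS_Sm sr scale1r (Se_m tr) (Se_Sm sr) ptr_d Hw.
exact: ptr_comp.
Qed.

Lemma Se_tr (r r' : Rp R) n (h : val r <= val r') : dS R m.+1 s t r n ->
  ptr X n h (Se r n) = (dS R m.+1 s t r' n : nat)%:R *: Se r' n.
Proof.
move=> /dS_cases [[-> sr]|[-> tr]].
  have sr' := le_trans sr h.
  by rewrite dS_Sm sr' scale1r (Se_Sm sr) (Se_Sm sr') ptr_comp.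
have tr' := le_trans tr h.
by rewrite dS_m tr' scale1r (Se_m tr) (Se_m tr') ptr_comp.
Qed.

Definition Smk : phom (Sobj R m.+1 s t hst) X := mkHom Se_d Se_tr.
Lemma SmkE r n z : @phf _ _ _ Smk r n z = coef z *: Se r n. Proof. by []. Qed.
End Smk.
Arguments SmkE {X s t hst m c w Hc Hw r n}.
Arguments Smk {X s t hst m c w}.
Arguments Se_Sm {X s t m c w r}.
Arguments Se_m {X s t m c w r}.

Section Simk.
Variables (X : pcc R) (s : Rp R) (m : nat) (c : pV X s m).
Hypotheses (Hc : pd X s m c = 0).
Definition Sie r n : pV X r n := trg r (at_deg c n).

Lemma Sie_d r n : dSi R m s r n -> pd X r n (Sie r n) = (dSi R m s r n.+1 : nat)%:R *: Sie r n.+1.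
Proof.
move=> /dSi_cases [-> sr].
by rewrite dSi_Sk scale0r /Sie at_degE (trgE sr) ptr_d Hc (lin0 (ptr_lin X _ sr)).
Qed.

Lemma Sie_tr (r r' : Rp R) n (h : val r <= val r') : dSi R m s r n ->
  ptr X n h (Sie r n) = (dSi R m s r' n : nat)%:R *: Sie r' n.
Proof.
move=> /dSi_cases [-> sr]; have sr' := le_trans sr h.
by rewrite dSi_k sr' scale1r /Sie at_degE (trgE sr) (trgE sr') ptr_comp.
Qed.

Definition Simk : phom (Siobj R m s) X := mkHom Sie_d Sie_tr.
Lemma SimkE r n z : @phf _ _ _ Simk r n z = coef z *: Sie r n. Proof. by []. Qed.
End Simk.
Arguments SimkE {X s m c Hc r n}.
Arguments Simk {X s m c}.

Lemma sq_core (X Y : pcc R) (p : phom X Y) r n (a b : bool) (z : 'rV[rat]_a)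
  (ex : pV X r n) (ey : pV Y r n) :
  (a -> phf p ex = (b : nat)%:R *: ey) ->
  phf p (coef z *: ex) = coef (z *m mx1 a b) *: ey.
Proof.
rewrite coef_mx1 (linZ (phf_lin p r n)); case: a z => z H.
  by rewrite H // scalerA mulrC.
by rewrite coef_false // mulr0 !scale0r.
Qed.

Section Zhom.
Variable dm : Rp R -> nat -> bool.
Variables (hc : forall (r s t : Rp R) n, val r <= val s -> val s <= val t ->
  dm r n -> dm t n -> dm s n)
  (hd : forall r n, ~~ [&& dm r n, dm r n.+1 & dm r n.+2])
  (ht : forall (r s : Rp R) n, val r <= val s ->
  dm r n -> dm s n.+1 -> dm r n.+1 = dm s n).
Variable X : pcc R.
Lemma z_d r n : dm r n -> pd X r n ((fun _ _ => 0) r n) = (dm r n.+1 : nat)%:R *: (fun r n => 0 : pV X r n) r n.+1.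
Proof. by rewrite scaler0 (lin0 (pd_lin X r n)). Qed.
Lemma z_tr (r s : Rp R) n (h : val r <= val s) : dm r n ->
  ptr X n h ((fun _ _ => 0) r n) = (dm s n : nat)%:R *: (fun r n => 0 : pV X r n) s n.
Proof. by rewrite scaler0 (lin0 (ptr_lin X n h)). Qed.
Definition zhom : phom (dimObj hc hd ht) X := mkHom z_d z_tr.
End Zhom.

Lemma llp_J0 (X Y : pcc R) (p : phom X Y) s t hst : llp (Jmap R 0 s t hst) p.
Proof.
move=> u v Huv; exists (zhom _ _ _ _ X); split=> r n a.
  by rewrite mkHomE scaler0 (zero_src u) // dD0.
by rewrite mkHomE scaler0 (lin0 (phf_lin p r n)) (zero_src v) // dD0.
Qed.

Lemma llp_Z0 (X Y : pcc R) (p : phom X Y) s : llp (Zmap R 0 s) p.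
Proof.
move=> u v Huv; exists (zhom _ _ _ _ X); split=> r n a.
  by rewrite mkHomE scaler0 (zero_src u).
by rewrite mkHomE scaler0 (lin0 (phf_lin p r n)) (zero_src v) // dD0.
Qed.


Lemma llp_J (X Y : pcc R) (p : phom X Y) (Hp : RLP Igen p) m (s t : Rp R)
  (hst : val s < val t) : llp (Jmap R m.+1 s t (ltW hst)) p.
Proof.
move=> u v Huv.
pose hst' := ltW hst.
pose x := @phf _ _ _ u t m (const_mx 1).
pose y := @phf _ _ _ v s m (const_mx 1).
have pxy : phf p x = ptr Y m hst' y.
  rewrite /x Huv /= one_mx1 ?dD_m ?lexx //.
  by rewrite (D_val_tr hst').
have Hc1 : pd X s m.+2 (0 : pV X s m.+2) = 0 := lin0 (pd_lin X s m.+2).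
have Hw1 : pd X t m.+1 (pd X t m x) = ptr X m.+2 hst' 0.
  by rewrite pdd (lin0 (ptr_lin X m.+2 hst')).
pose u1 := Smk Hc1 Hw1.
pose v1 := Dmk Y s m.+1 (pd Y s m y).
have comm1 : forall (r : Rp R) n a, phf p (@phf _ _ _ u1 r n a) = phf v1 (@phf _ _ _ (Imap R m.+2 s t hst') r n a).
  move=> r n a; rewrite /u1 /v1 SmkE DmkE; apply: sq_core.
  move=> /dS_cases [[-> sr]|[-> tr]].
    rewrite (Se_Sm sr) (lin0 (ptr_lin X _ sr)) (lin0 (phf_lin p _ _)).
    by rewrite /De ?at_degNS ?at_degSN ?at_degNSS ?at_degSSN at_degE pdd addr0 trg0 scaler0.
  have sr := le_trans hst' tr.
  rewrite (Se_m tr) dD_m sr scale1r /De at_degE ?at_degNS ?at_degSN ?at_degNSS ?at_degSSN.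
  rewrite addr0 (trgE sr) phf_tr phf_d pxy ptr_d.
  exact: ptr_comp.
have [h1 [Hh1a Hh1b]] := Hp _ _ _ (Igen_fin R m.+2 s t hst) u1 v1 comm1.
pose c := @phf _ _ _ h1 s m.+1 (const_mx 1).
have Hc : pd X s m.+1 c = 0.
  rewrite /c -phf_d -(D_d1 (lexx (val s))).
  have -> : (const_mx 1 : 'rV[rat]_(dD R m.+2 s s m.+2)) =
     @phf _ _ _ (Imap R m.+2 s t hst') s m.+2 (const_mx 1 : 'rV[rat]_(dS R m.+2 s t s m.+2)).
    by rewrite /= one_mx1 // ?dS_Sm ?dD_Sm.
  rewrite Hh1a /u1 SmkE /Se at_degE ?at_degNS ?at_degSN ?at_degNSS ?at_degSSN !trg0 addr0.
  by rewrite scaler0.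
have Hpc : phf p c = pd Y s m y by rewrite /c Hh1b Dmk1.
have Htc : ptr X m.+1 hst' c = pd X t m x.
  rewrite /c -phf_tr -(D_tr1 hst').
  have -> : (const_mx 1 : 'rV[rat]_(dD R m.+2 s t m.+1)) =
     @phf _ _ _ (Imap R m.+2 s t hst') t m.+1 (const_mx 1 : 'rV[rat]_(dS R m.+2 s t t m.+1)).
    by rewrite /= one_mx1 // ?dS_m ?dD_m.
  rewrite Hh1a /u1 SmkE coef_one ?dS_m // scale1r.
  by rewrite (Se_m (lexx (val t))) ptr_id.
have Hw2 : pd X t m x = ptr X m.+1 hst' c by rewrite Htc.
pose u2 := Smk Hc Hw2.
have Hv : @phf _ _ _ v s m (const_mx 1) = @phf _ _ _ (Dmk Y s m y) s m (const_mx 1).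
  by rewrite Dmk1.
have comm2 : forall (r : Rp R) n a, phf p (@phf _ _ _ u2 r n a) = phf v (@phf _ _ _ (Imap R m.+1 s t hst') r n a).
  move=> r n a; rewrite (D_uniq Hv) /u2 SmkE DmkE; apply: sq_core.
  move=> /dS_cases [[-> sr]|[-> tr]].
    rewrite (Se_Sm sr) dD_Sm sr scale1r phf_tr Hpc /De at_degE.
    by rewrite ?at_degNS ?at_degSN ?at_degNSS ?at_degSSN add0r (trgE sr).
  have sr := le_trans hst' tr.
  rewrite (Se_m tr) dD_m sr scale1r phf_tr pxy /De at_degE.
  rewrite ?at_degNS ?at_degSN ?at_degNSS ?at_degSSN addr0 (trgE sr).
  exact: ptr_comp.
have [h2 [Hh2a Hh2b]] := Hp _ _ _ (Igen_fin R m.+1 s t hst) u2 v comm2.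
exists h2; split; last exact: Hh2b.
move=> r n a.
have H := @D_uniq m t X (pcomp h2 (Jmap R m.+1 s t hst')) u.
apply: H.
rewrite /= one_mx1 ?dD_m ?lexx //.
have -> : (const_mx 1 : 'rV[rat]_(dD R m.+1 s t m)) =
   @phf _ _ _ (Imap R m.+1 s t hst') t m (const_mx 1 : 'rV[rat]_(dS R m.+1 s t t m)).
  by rewrite /= one_mx1 // ?dS_m ?dD_m.
rewrite Hh2a /u2 SmkE coef_one ?dS_m // scale1r.
by rewrite (Se_m (lexx (val t))) ptr_id.
Qed.

Lemma llp_Z (X Y : pcc R) (p : phom X Y) (Hp : RLP Igen p) m (s : Rp R) :
  llp (Zmap R m.+1 s) p.
Proof.
move=> u v Huv.
pose y := @phf _ _ _ v s m (const_mx 1).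
have Hc1 : pd X s m.+2 (0 : pV X s m.+2) = 0 := lin0 (pd_lin X s m.+2).
pose u1 := Simk Hc1.
pose v1 := Dmk Y s m.+1 (pd Y s m y).
have comm1 : forall (r : Rp R) n a, phf p (@phf _ _ _ u1 r n a) = phf v1 (@phf _ _ _ (Iimap R m.+2 s) r n a).
  move=> r n a; rewrite /u1 /v1 SimkE DmkE; apply: sq_core.
  move=> /dSi_cases [-> sr].
  rewrite /Sie /De !at_degE ?at_degNS pdd add0r !trg0 scaler0.
  exact: (lin0 (phf_lin p _ _)).
have [h1 [Hh1a Hh1b]] := Hp _ _ _ (Igen_inf R m.+2 s) u1 v1 comm1.
pose c := @phf _ _ _ h1 s m.+1 (const_mx 1).
have Hc : pd X s m.+1 c = 0.
  rewrite /c -phf_d -(D_d1 (lexx (val s))).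
  have -> : (const_mx 1 : 'rV[rat]_(dD R m.+2 s s m.+2)) =
     @phf _ _ _ (Iimap R m.+2 s) s m.+2 (const_mx 1 : 'rV[rat]_(dSi R m.+2 s s m.+2)).
    by rewrite /= one_mx1 // ?dSi_k ?dD_Sm.
  by rewrite Hh1a /u1 SimkE /Sie at_degE trg0 scaler0.
have Hpc : phf p c = pd Y s m y by rewrite /c Hh1b Dmk1.
pose u2 := Simk Hc.
have Hv : @phf _ _ _ v s m (const_mx 1) = @phf _ _ _ (Dmk Y s m y) s m (const_mx 1).
  by rewrite Dmk1.
have comm2 : forall (r : Rp R) n a, phf p (@phf _ _ _ u2 r n a) = phf v (@phf _ _ _ (Iimap R m.+1 s) r n a).
  move=> r n a; rewrite (D_uniq Hv) /u2 SimkE DmkE; apply: sq_core.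
  move=> /dSi_cases [-> sr].
  rewrite dD_Sm sr scale1r /Sie /De !at_degE ?at_degNS add0r !(trgE sr).
  by rewrite phf_tr Hpc.
have [h2 [Hh2a Hh2b]] := Hp _ _ _ (Igen_inf R m.+1 s) u2 v comm2.
exists h2; split; last exact: Hh2b.
move=> r n a.
by rewrite (zero_src (Zmap R m.+1 s)) // (lin0 (phf_lin h2 r n)) (zero_src u).
Qed.

Lemma RLP_IJ (X Y : pcc R) (p : phom X Y) : RLP Igen p -> RLP Jgen p.
Proof.
move=> Hp A B j [].
  by move=> [|m] s t hst; [apply: llp_J0 | apply: llp_J].
by move=> [|m] s; [apply: llp_Z0 | apply: llp_Z].
Qed.

Lemma myIfT (T : Type) (b : bool) (x y : T) : b -> (if b then x else y) = x.
Proof. by move->. Qed.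
Lemma myIfF (T : Type) (b : bool) (x y : T) : ~~ b -> (if b then x else y) = y.
Proof. by move/negbTE->. Qed.

Arguments myIfT {T b x y}.
Arguments myIfF {T b x y}.

Lemma trg_lin (X : pcc R) (s r : Rp R) n : linear (fun x : pV X s n => trg r x).
Proof.
move=> a x y; have [h|h] : val s <= val r \/ ~~ (val s <= val r) by case: (_ <= _); [left|right].
  by rewrite !(trgE h) (ptr_lin X n h).
by rewrite !trgN // scaler0 addr0.
Qed.

Lemma trg_phf (X Y : pcc R) (f : phom X Y) (s r : Rp R) n (x : pV X s n) :
  phf f (trg r x) = trg r (phf f x).
Proof.
have [h|h] : val s <= val r \/ ~~ (val s <= val r) by case: (_ <= _); [left|right].
  by rewrite !(trgE h) phf_tr.
by rewrite !trgN // (lin0 (phf_lin f r n)).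
Qed.

Section Rr.
Variables (r0 : Rp R) (C : nat -> lmodType rat) (dC : forall n, C n -> C n.+1).
Hypotheses (dC_lin : forall n, linear (dC n)) (dCC : forall n x, dC n.+1 (dC n x) = 0).

Definition RV (s : Rp R) n : lmodType rat := {ffun 'I_(nat_of_bool (val s <= val r0)%R) -> C n}.
Definition Rd s n (f : RV s n) : RV s n.+1 := [ffun j => dC n (f j)].
Definition Rtr (s s' : Rp R) n (h : val s <= val s') (f : RV s n) : RV s' n :=
  [ffun _ => \sum_i f i].
Definition idx {s s' : Rp R} (h : val s <= val s') (j : 'I_(nat_of_bool (val s' <= val r0)%R)) :
  'I_(nat_of_bool (val s <= val r0)%R) := ord0b (le_trans h (ord_bool j)).

Definition Rr : pcc R.
refine (@PCC R RV Rd _ _ Rtr _ _ _ _).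
- by move=> s n a f g; apply/ffunP => j; rewrite !ffunE dC_lin.
- by move=> s n f; apply/ffunP => j; rewrite !ffunE dCC.
- move=> s s' n h a f g; apply/ffunP => j; rewrite !ffunE.
  by rewrite !(sum1 (idx h j)) !ffunE.
- by move=> s n h f; apply/ffunP => j; rewrite ffunE (sum1 j).
- move=> s s' s'' n h1 h2 h3 f; apply/ffunP => j.
  by rewrite !ffunE (sum1 (idx h2 j)) ffunE.
- move=> s s' n h f; apply/ffunP => j.
  by rewrite !ffunE !(sum1 (idx h j)) ffunE.
Defined.

Lemma RdE s n (f : pV Rr s n) j : (pd Rr s n f) j = dC n (f j).
Proof. by rewrite /= ffunE. Qed.
Lemma RtrE s s' n (h : val s <= val s') (f : pV Rr s n) j : (ptr Rr n h f) j = \sum_i f i.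
Proof. by rewrite /= ffunE. Qed.

Section Adj.
Variables (Z : pcc R) (phi : forall n, pV Z r0 n -> C n).
Hypotheses (phi_lin : forall n, linear (phi n))
  (phi_d : forall n z, phi n.+1 (pd Z r0 n z) = dC n (phi n z)).
Definition adj : phom Z Rr.
refine (@PHom R Z Rr (fun s n z => [ffun _ => phi n (trg r0 z)]) _ _ _).
- move=> s n a z w; apply/ffunP => j; rewrite !ffunE.
  by rewrite (trg_lin _ _ _ _ a) phi_lin.
- move=> s n z; apply/ffunP => j; rewrite !ffunE.
  have sr := ord_bool j; by rewrite !(trgE sr) -ptr_d phi_d.
- move=> s s' n h z; apply/ffunP => j; rewrite !ffunE (sum1 (idx h j)) ffunE.
  have s'r := ord_bool j; have sr := le_trans h s'r.
  by rewrite (trgE s'r) (trgE sr) ptr_comp.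
Defined.
Lemma adjE s n (z : pV Z s n) j : (@phf _ _ _ adj s n z) j = phi n (trg r0 z).
Proof. by rewrite /= ffunE. Qed.
End Adj.
End Rr.
Arguments Rr r0 {C dC} dC_lin dCC.
Arguments idx {r0 s s'} h j.
Arguments adj r0 {C dC} dC_lin dCC {Z phi} phi_lin phi_d.
Arguments RdE r0 {C dC} dC_lin dCC {s n} f j.
Arguments RtrE r0 {C dC} dC_lin dCC {s s' n} h f j.
Arguments adjE r0 {C dC} dC_lin dCC {Z phi} phi_lin phi_d {s n} z j.

Section Rmap.
Variables (r0 : Rp R) (C : nat -> lmodType rat) (dC : forall n, C n -> C n.+1).
Hypotheses (dC_lin : forall n, linear (dC n)) (dCC : forall n x, dC n.+1 (dC n x) = 0).
Variables (C' : nat -> lmodType rat) (dC' : forall n, C' n -> C' n.+1).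
Hypotheses (dC'_lin : forall n, linear (dC' n)) (dCC' : forall n x, dC' n.+1 (dC' n x) = 0).
Variables (g : forall n, C n -> C' n) (g_lin : forall n, linear (g n))
  (g_d : forall n x, g n.+1 (dC n x) = dC' n (g n x)).
Definition Rmap : phom (Rr r0 dC_lin dCC) (Rr r0 dC'_lin dCC').
refine (@PHom R (Rr r0 dC_lin dCC) (Rr r0 dC'_lin dCC') (fun s n f => [ffun j => g n (f j)]) _ _ _).
- by move=> s n a f f'; apply/ffunP => j; rewrite !ffunE g_lin.
- by move=> s n f; apply/ffunP => j; rewrite !ffunE g_d.
- move=> s s' n h f; apply/ffunP => j; rewrite !ffunE.
  by rewrite !(sum1 (idx h j)) !ffunE.
Defined.
Lemma RmapE s n (f : pV (Rr r0 dC_lin dCC) s n) j : (@phf _ _ _ Rmap s n f) j = g n (f j).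
Proof. by rewrite /= ffunE. Qed.
End Rmap.
Arguments Rmap r0 {C dC} dC_lin dCC {C' dC'} dC'_lin dCC' {g} g_lin g_d.
Arguments RmapE r0 {C dC} dC_lin dCC {C' dC'} dC'_lin dCC' {g} g_lin g_d {s n} f j.

Section W.
Variables (A B : pcc R) (i : phom A B) (r : Rp R).

Definition Cw n : lmodType rat := (pV A r n * pV B r n * pV B r n.-1)%type.
Definition delta n : pV B r n.-1 -> pV B r n :=
  match n return pV B r n.-1 -> pV B r n with 0 => fun _ => 0 | m.+1 => pd B r m end.
Lemma delta_lin n : linear (delta n).
Proof. case: n => [|m] a x y /=; [by rewrite scaler0 addr0 | exact: pd_lin]. Qed.
Lemma pd_delta n c : pd B r n (delta n c) = 0.
Proof. case: n c => [|m] c /=; [exact: (lin0 (pd_lin B r 0)) | exact: pdd]. Qed.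

Definition dCw {n} (x : Cw n) : Cw n.+1 := (pd A r n x.1.1, pd B r n x.1.2, x.1.2 - delta n x.2).
Lemma dCw_lin n : linear (@dCw n).
Proof.
move=> a [[x1 x2] x3] [[y1 y2] y3].
rewrite /dCw /= (pd_lin A r n) (pd_lin B r n) (linD (delta_lin n)) (linZ (delta_lin n)).
congr (_, _, _).
cbn; by rewrite scalerBr opprD addrACA.
Qed.
Lemma dCwC n x : @dCw n.+1 (@dCw n x) = 0.
Proof.
case: x => [[x1 x2] x3]; rewrite /dCw /= !pdd (linB (pd_lin B r n)) pd_delta subr0 subrr.
by [].
Qed.

Lemma trip_eq n (x y : Cw n) : x.1.1 = y.1.1 -> x.1.2 = y.1.2 -> x.2 = y.2 -> x = y.
Proof. by case: x y => [[? ?] ?] [[? ?] ?] /= -> -> ->. Qed.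

Definition gW {n} (x : Cw n) : pV B r n := phf i x.1.1 + x.1.2.
Lemma gW_lin n : linear (@gW n).
Proof.
move=> a [[x1 x2] x3] [[y1 y2] y3]; rewrite /gW; cbn.
by rewrite (phf_lin i) scalerDr addrACA.
Qed.
Lemma gW_d n x : gW (dCw x) = pd B r n (gW x).
Proof.
case: x => [[x1 x2] x3]; rewrite /gW; cbn.
by rewrite (linD (pd_lin B r n)) phf_d.
Qed.
Definition iW {n} (a : pV A r n) : Cw n := (a, 0, 0).
Lemma iW_lin n : linear (@iW n).
Proof.
move=> a x y; apply: trip_eq; rewrite /iW; cbn; by rewrite ?scaler0 ?addr0.
Qed.
Lemma iW_d n a : iW (pd A r n a) = dCw (iW a).
Proof. by rewrite /iW /dCw /= (lin0 (pd_lin B r n)) (lin0 (delta_lin n)) subr0. Qed.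
Definition sW {n} (b : pV B r n) : Cw n := (0, b, 0).
Lemma gsW n b : gW (@sW n b) = b.
Proof. by rewrite /gW /sW /= (lin0 (phf_lin i r n)) add0r. Qed.
Lemma idB_lin n : linear (fun b : pV B r n => b).
Proof. by []. Qed.
Lemma idB_d n (b : pV B r n) : pd B r n b = pd B r n b.
Proof. by []. Qed.

Definition XW := Rr r dCw_lin dCwC.
Definition YW := Rr r (pd_lin B r) (pdd B r).
Definition pW : phom XW YW := Rmap r dCw_lin dCwC (pd_lin B r) (pdd B r) gW_lin gW_d.
Definition uW : phom A XW := adj r dCw_lin dCwC iW_lin iW_d.
Definition vW : phom B YW := adj r (pd_lin B r) (pdd B r) idB_lin idB_d.

Lemma commW (s : Rp R) n a : phf pW (@phf _ _ _ uW s n a) = phf vW (phf i a).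
Proof.
apply/ffunP => j.
rewrite /pW /uW /vW RmapE !adjE -trg_phf.
by rewrite /gW /iW /= addr0.
Qed.

Lemma llpW_J m (s t : Rp R) (hst : val s < val t) : llp (Jmap R m.+1 s t (ltW hst)) pW.
Proof.
move=> u v Huv.
pose hst' := ltW hst.
pose x := @phf _ _ _ u t m (const_mx 1).
pose y := @phf _ _ _ v s m (const_mx 1).
have pxy : phf pW x = ptr YW m hst' y.
  rewrite /x Huv /= one_mx1 ?dD_m ?lexx //.
  by rewrite (D_val_tr hst').
pose x' : pV XW s m := [ffun _ => if val t <= val r then \sum_k x k else sW (\sum_k y k)].
exists (Dmk XW s m x'); split.
  move=> r' n a.
  apply: (@D_uniq m t XW (pcomp (Dmk XW s m x') (Jmap R m.+1 s t hst')) u).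
  rewrite pcompE.
  have -> : @phf _ _ _ (Jmap R m.+1 s t hst') t m (const_mx 1 : 'rV[rat]_(dD R m.+1 t t m)) =
    (const_mx 1 : 'rV[rat]_(dD R m.+1 s t m)) by rewrite /= one_mx1 ?dD_m ?lexx.
  rewrite (D_val_tr hst') Dmk1 -/x.
  apply/ffunP => j; have tr := ord_bool j.
  rewrite RtrE (sum1 (idx hst' j)) ffunE (myIfT tr) (sum1 j).
  by [].
move=> r' n b.
apply: (@D_uniq m s YW (pcomp pW (Dmk XW s m x')) v).
rewrite pcompE Dmk1 -/y.
apply/ffunP => j.
rewrite RmapE ffunE.
have [tr|tr] : val t <= val r \/ ~~ (val t <= val r) by case: (_ <= _); [left|right].
  rewrite (myIfT tr) (sum1 (ord0b tr)).
  rewrite -(RmapE r dCw_lin dCwC (pd_lin B r) (pdd B r) gW_lin gW_d) -/pW pxy RtrE.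
  by rewrite (sum1 j).
by rewrite (myIfF tr) gsW (sum1 j).
Qed.

Lemma llpW_Z m (s : Rp R) : llp (Zmap R m.+1 s) pW.
Proof.
move=> u v Huv.
pose y := @phf _ _ _ v s m (const_mx 1).
pose x' : pV XW s m := [ffun _ => sW (\sum_k y k)].
exists (Dmk XW s m x'); split.
  move=> r' n a.
  by rewrite (zero_src (Zmap R m.+1 s)) // (lin0 (phf_lin _ r' n)) (zero_src u).
move=> r' n b.
apply: (@D_uniq m s YW (pcomp pW (Dmk XW s m x')) v).
rewrite pcompE Dmk1 -/y.
apply/ffunP => j.
by rewrite RmapE ffunE gsW (sum1 j).
Qed.

Lemma RLPW : RLP Jgen pW.
Proof.
move=> A' B' j [].
  by move=> [|m] s t hst; [apply: llp_J0 | apply: llpW_J].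
by move=> [|m] s; [apply: llp_Z0 | apply: llpW_Z].
Qed.

Lemma qiso_W : Cof Jgen i -> qiso_at i r.
Proof.
move=> Hcof.
have [h [Hhi Hhp]] := Hcof _ _ pW RLPW uW vW (@commW).
pose i0 := ord0b (lexx (val r)).
pose H n (y : pV B r n) : Cw n := (@phf _ _ _ h r n y) i0.
have HD : forall n y, H n.+1 (pd B r n y) = dCw (H n y).
  by move=> n y; rewrite /H phf_d RdE.
have HI : forall n a, H n (phf i a) = iW a.
  move=> n a; rewrite /H Hhi /uW adjE.
  by rewrite (trgE (lexx (val r))) ptr_id.
have HG : forall n y, gW (H n y) = y.
  move=> n y; have := congr1 (fun f : {ffun 'I_(nat_of_bool (val r <= val r)%R) -> pV B r n} => f i0) (Hhp r n y).
  cbv beta; rewrite /pW RmapE /vW adjE => ->.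
  by rewrite (trgE (lexx (val r))) ptr_id.
have H0 : forall n, H n 0 = 0.
  by move=> n; rewrite /H (lin0 (phf_lin h r n)) ffunE.
move=> n; split.
  move=> y Hy.
  have Hc := HD n y; rewrite Hy H0 in Hc.
  have Hg := HG n y.
  move: Hc Hg; case: (H n y) => [[a b] c] Hc Hg.
  have Ea : pd A r n a = 0 by have := congr1 (fun q => q.1.1) Hc.
  have Eb : b = delta n c.
    have := congr1 (fun q => q.2) Hc => /= /esym /eqP; rewrite subr_eq0 => /eqP.
    by [].
  exists a; split => //.
  have E : phf i a - y = - b by rewrite -Hg /gW /= opprD addrA subrr add0r.
  move: E; rewrite Eb; case: n y Hy a b c Hc Hg Ea Eb => [|n] y Hy a b c Hc Hg Ea Eb /= E.
    by rewrite E oppr0.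
  by exists (- c); rewrite (linN (pd_lin B r n)) E.
move=> x Hx.
case: n x Hx => [|n] x Hx /=.
  move=> Hb; have := HI 0 x; rewrite Hb H0 => E.
  by have := congr1 (fun q => q.1.1) E.
move=> [z Hz]; have := HI n.+1 x; rewrite -Hz HD => E.
exists (H n z).1.1.
by have := congr1 (fun q => q.1.1) E.
Qed.

End W.

Theorem mainTheorem11_gen (A B : pcc R) (i : phom A B) :
  Cof Jgen i -> Cof Igen i /\ Wq A B i.
Proof.
move=> Hcof; split.
  move=> X Y p Hp; apply: Hcof; exact: RLP_IJ.
by move=> r; apply: qiso_W.
Qed.


End Gen.

Theorem mainTheorem11 (R : realType) (A B : pcc R) (i : phom A B) :
  Cof Jgen i -> Cof Igen i /\ Wq A B i.
Proof. exact: mainTheorem11_gen. Qed.
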